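(* Let $I$ be an index set, $S,T\in GL(2,\mathbb R)$, and for $r\in I$ let $P_r=S\,\mathrm{diag}\{p_{1r},p_{2r}\}S^{-1}$, $Q_r=T\,\mathrm{diag}\{q_{1r},q_{2r}\}T^{-1}$ with all $p_{kr},q_{kr}$ nonzero real numbers. There exists a homeomorphism $f\colon\overline{\mathbb R}\to\overline{\mathbb R}$ with $f(P_r(x))=Q_r(f(x))$ for all $x\in\overline{\mathbb R}$, $r\in I$, if and only if there exists a real number $\alpha\neq-1$ such that $$\frac{q_{1r}}{q_{2r}}=\frac{p_{1r}}{p_{2r}}\Bigl|\frac{p_{1r}}{p_{2r}}\Bigr|^{\alpha}\quad\text{for all }r\in I.$$
   Context: $\overline{\mathbb R}=\mathbb R\cup\{\infty\}$ is the extended real line (real projective line). A matrix $\begin{pmatrix}a&b\\c&d\end{pmatrix}\in GL(2,\mathbb R)$ acts on $\overline{\mathbb R}$ by $x\mapsto\frac{ax+b}{cx+d}$. *)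

(* Defs.v *)
From Stdlib Require Import Reals.
Open Scope R_scope.

Record mat2 := Mat2 { ma : R; mb : R; mc : R; md : R }.

Definition mdet (M : mat2) : R := ma M * md M - mb M * mc M.

Definition mmul (M N : mat2) : mat2 :=
  Mat2 (ma M * ma N + mb M * mc N) (ma M * mb N + mb M * md N)
       (mc M * ma N + md M * mc N) (mc M * mb N + md M * md N).

(** Inverse (meaningful when det <> 0). *)
Definition minv (M : mat2) : mat2 :=
  Mat2 (md M / mdet M) (- mb M / mdet M) (- mc M / mdet M) (ma M / mdet M).

Definition diag2 (x y : R) : mat2 := Mat2 x 0 0 y.

Definition GL2 (M : mat2) : Prop := mdet M <> 0.

(** Extended real line R ∪ {∞}: [None] is ∞. *)
Definition ext := option R.

Definition act (M : mat2) (x : ext) : ext :=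
  match x with
  | Some t => if Req_EM_T (mc M * t + md M) 0 then None
              else Some ((ma M * t + mb M) / (mc M * t + md M))
  | None => if Req_EM_T (mc M) 0 then None else Some (ma M / mc M)
  end.

Definition ext_open (U : ext -> Prop) : Prop :=
  open_set (fun x : R => U (Some x)) /\
  (U None -> exists M : R, forall x : R, M < Rabs x -> U (Some x)).

Definition ext_continuous (f : ext -> ext) : Prop :=
  forall U, ext_open U -> ext_open (fun x => U (f x)).

Definition ext_homeomorphism (f : ext -> ext) : Prop :=
  exists g : ext -> ext,
    (forall x, g (f x) = x) /\ (forall y, f (g y) = y) /\
    ext_continuous f /\ ext_continuous g.

(* Main.v *)
Require Import Defs.
From Stdlib Require Import Reals Lra Classical ClassicalEpsilon FunctionalExtensionality ZArith.
Open Scope R_scope.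

Lemma cpt_elim f x : continuity_pt f x -> forall e, 0 < e ->
  exists d, 0 < d /\ forall y, Rabs (y - x) < d -> Rabs (f y - f x) < e.
Proof.
  intros H e He. destruct (H e He) as [d [Hd Hy]]. exists d; split; [lra|].
  intros y Hyx. destruct (Req_dec y x) as [->|Hne].
  - rewrite Rminus_diag, Rabs_R0; lra.
  - apply (Hy y). split; [split; [exact I|auto]|exact Hyx].
Qed.

Lemma cpt_intro f x : (forall e, 0 < e ->
  exists d, 0 < d /\ forall y, Rabs (y - x) < d -> Rabs (f y - f x) < e) -> continuity_pt f x.
Proof.
  intros H e He. destruct (H e He) as [d [Hd Hy]]. exists d; split; [lra|].
  intros y [_ Hyx]. apply Hy. exact Hyx.
Qed.

Lemma act_mmul M N x : mdet N <> 0 -> act (mmul M N) x = act M (act N x).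
Proof.
  intros HN. unfold mdet in HN.
  destruct M as [a b c d], N as [a' b' c' d']; simpl in *.
  destruct x as [t|]; simpl.
  - destruct (Req_EM_T (c' * t + d') 0) as [H0|H0]; simpl.
    + assert (Hn : a' * t + b' <> 0).
      { intro Hn. apply HN.
        assert (E: (a' * d' - b' * c') * t = a' * (c'*t+d') * t - c' * t * (a'*t+b') + 0) by ring.
        destruct (Req_dec t 0) as [->|Ht].
        - rewrite Rmult_0_r, Rplus_0_l in H0, Hn. subst. ring.
        - rewrite H0, Hn in E. apply (Rmult_eq_reg_r t); [|auto]. lra. }
      assert (E1: (c * a' + d * c') * t + (c * b' + d * d') = c * (a' * t + b') + d * (c' * t + d')) by ring.
      rewrite E1, H0, Rmult_0_r, Rplus_0_r.
      destruct (Req_EM_T (c * (a' * t + b')) 0) as [H1|H1];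
      destruct (Req_EM_T c 0) as [H2|H2]; auto.
      * exfalso. apply H2. destruct (Rmult_integral _ _ H1); tauto.
      * subst. exfalso. apply H1. ring.
      * f_equal.
        replace ((a * a' + b * c') * t + (a * b' + b * d')) with (a * (a' * t + b') + b * (c' * t + d')) by ring.
        rewrite H0. field. auto.
    + assert (E1: (c * a' + d * c') * t + (c * b' + d * d') = (c * ((a' * t + b') / (c' * t + d')) + d) * (c' * t + d')) by (field; auto).
      rewrite E1.
      destruct (Req_EM_T (c * ((a' * t + b') / (c' * t + d')) + d) 0) as [H1|H1].
      * rewrite H1, Rmult_0_l. destruct (Req_EM_T 0 0); [auto|lra].
      * destruct (Req_EM_T ((c * ((a' * t + b') / (c' * t + d')) + d) * (c' * t + d')) 0) as [H2|H2].
        -- exfalso. destruct (Rmult_integral _ _ H2); auto.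
        -- f_equal. field. split; [auto|]. intro Hz; apply H2; rewrite <- E1, <- Hz; ring.
  - destruct (Req_EM_T c' 0) as [H0|H0]; simpl.
    + subst. assert (Ha : a' <> 0) by (intro; subst; apply HN; ring).
      replace (c * a' + d * 0) with (c * a') by ring.
      destruct (Req_EM_T (c * a') 0) as [H1|H1]; destruct (Req_EM_T c 0) as [H2|H2]; auto.
      * exfalso. destruct (Rmult_integral _ _ H1); auto.
      * subst. exfalso. apply H1; ring.
      * f_equal. field. auto.
    + assert (E1: c * a' + d * c' = (c * (a' / c') + d) * c') by (field; auto).
      rewrite E1.
      destruct (Req_EM_T (c * (a' / c') + d) 0) as [H1|H1].
      * rewrite H1, Rmult_0_l. destruct (Req_EM_T 0 0); [auto|lra].
      * destruct (Req_EM_T ((c * (a' / c') + d) * c') 0) as [H2|H2].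
        -- exfalso. destruct (Rmult_integral _ _ H2); auto.
        -- f_equal. field. split; [auto|]. intro Hz; apply H2; rewrite <- E1, <- Hz; ring.
Qed.

Lemma mdet_minv M : mdet M <> 0 -> mdet (minv M) <> 0.
Proof.
  intros H. destruct M as [a b c d]; cbv [mdet minv ma mb mc md] in *.
  replace (d / (a * d - b * c) * (a / (a * d - b * c)) - - b / (a * d - b * c) * (- c / (a * d - b * c)))
    with (/ (a*d - b*c)) by (field; auto).
  apply Rinv_neq_0_compat; auto.
Qed.

Lemma act_id x : act (Mat2 1 0 0 1) x = x.
Proof.
  destruct x as [t|]; simpl.
  - destruct (Req_EM_T (0 * t + 1) 0); [lra|]. f_equal. field.
  - destruct (Req_EM_T 0 0); [auto|lra].
Qed.

Lemma act_minv_l M x : mdet M <> 0 -> act (minv M) (act M x) = x.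
Proof.
  intros H. rewrite <- act_mmul by auto.
  replace (mmul (minv M) M) with (Mat2 1 0 0 1). apply act_id.
  destruct M as [a b c d]; cbv [mdet minv mmul ma mb mc md] in *.
  f_equal; field; auto.
Qed.

Lemma act_minv_r M x : mdet M <> 0 -> act M (act (minv M) x) = x.
Proof.
  intros H. rewrite <- act_mmul by (apply mdet_minv; auto).
  replace (mmul M (minv M)) with (Mat2 1 0 0 1). apply act_id.
  destruct M as [a b c d]; cbv [mdet minv mmul ma mb mc md] in *.
  f_equal; field; auto.
Qed.

Definition scale (l : R) (x : ext) : ext :=
  match x with Some t => Some (l * t) | None => None end.

Lemma act_diag p1 p2 x : p2 <> 0 -> act (diag2 p1 p2) x = scale (p1 / p2) x.
Proof.
  intros H. destruct x as [t|]; simpl.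
  - destruct (Req_EM_T (0 * t + p2) 0); [lra|]. f_equal. field. auto.
  - destruct (Req_EM_T 0 0); [auto|lra].
Qed.

Lemma act_conj S D x : mdet S <> 0 -> mdet D <> 0 ->
  act (mmul (mmul S D) (minv S)) x = act S (act D (act (minv S) x)).
Proof.
  intros H HD. rewrite act_mmul by (apply mdet_minv; auto).
  rewrite act_mmul; auto.
Qed.

Lemma mdet_diag p1 p2 : p1 <> 0 -> p2 <> 0 -> mdet (diag2 p1 p2) <> 0.
Proof. intros. unfold mdet, diag2; simpl. replace (p1 * p2 - 0 * 0) with (p1*p2) by ring.
  apply Rmult_integral_contrapositive; auto. Qed.

Definition within (y : ext) (e : R) (z : ext) : Prop :=
  match y with
  | Some u => exists v, z = Some v /\ Rabs (v - u) < e
  | None => z = None \/ exists v, z = Some v /\ 1 / e < Rabs v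
  end.

Definition cont_at (f : ext -> ext) (x : ext) : Prop :=
  forall e, 0 < e -> exists d, 0 < d /\ forall z, within x d z -> within (f x) e (f z).

Lemma open_within V y : ext_open V -> V y -> exists e, 0 < e /\ forall z, within y e z -> V z.
Proof.
  intros [Ho Hn] Hy. destruct y as [u|].
  - destruct (Ho u Hy) as [[d Hd] Hi]. exists d; split; auto.
    intros z [v [-> Hv]]. apply Hi. exact Hv.
  - destruct (Hn Hy) as [B HB]. exists (1 / (Rabs B + 1)). split.
    + apply Rdiv_lt_0_compat; [lra|]. pose proof (Rabs_pos B); lra.
    + intros z [->|[v [-> Hv]]]; auto. apply HB.
      replace (1 / (1 / (Rabs B + 1))) with (Rabs B + 1) in Hv by (field; pose proof (Rabs_pos B); lra).
      pose proof (Rle_abs B); lra.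
Qed.

Lemma cont_continuous f : (forall x, cont_at f x) -> ext_continuous f.
Proof.
  intros Hc U HU. split.
  - intros t Ht. destruct (open_within U (f (Some t)) HU Ht) as [e [He Hi]].
    destruct (Hc (Some t) e He) as [d [Hd Hz]].
    exists (mkposreal d Hd). intros s Hs. apply Hi, Hz. exists s; split; auto.
  - intros HN. destruct (open_within U (f None) HU HN) as [e [He Hi]].
    destruct (Hc None e He) as [d [Hd Hz]].
    exists (1 / d). intros s Hs. apply Hi, Hz. right. exists s; split; auto.
Qed.

Lemma continuous_real h t u : ext_continuous h -> h (Some t) = Some u ->
  forall e, 0 < e -> exists d, 0 < d /\ forall s, Rabs (s - t) < d ->
    exists v, h (Some s) = Some v /\ Rabs (v - u) < e.
Proof.
  intros Hc Ht e He.
  set (U := fun y : ext => match y with Some v => Rabs (v - u) < e | None => False end).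
  assert (HU : ext_open U).
  { split.
    - intros x Hx. simpl in Hx.
      exists (mkposreal (e - Rabs (x - u)) ltac:(lra)). intros y Hy. unfold disc in Hy; simpl in *.
      replace (y - u) with ((y - x) + (x - u)) by ring.
      pose proof (Rabs_triang (y - x) (x - u)); lra.
    - simpl. tauto. }
  destruct (Hc U HU) as [Ho _].
  assert (Hin : U (h (Some t))) by (rewrite Ht; simpl; rewrite Rminus_diag, Rabs_R0; lra).
  destruct (Ho t Hin) as [[d Hd] Hi]. exists d; split; auto.
  intros s Hs. specialize (Hi s Hs). simpl in Hi.
  destruct (h (Some s)) as [v|] eqn:E; [exists v; auto|contradiction].
Qed.

Lemma cont_comp f g : ext_continuous f -> ext_continuous g -> ext_continuous (fun x => f (g x)).
Proof. intros Hf Hg U HU. apply (Hg (fun y => U (f y))). apply Hf. exact HU. Qed.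

Lemma homeo_comp f g : ext_homeomorphism f -> ext_homeomorphism g ->
  ext_homeomorphism (fun x => f (g x)).
Proof.
  intros [fi [H1 [H2 [H3 H4]]]] [gi [G1 [G2 [G3 G4]]]].
  exists (fun y => gi (fi y)). split; [|split; [|split]].
  - intros x. rewrite H1; auto.
  - intros y. rewrite G2; auto.
  - apply cont_comp; auto.
  - apply cont_comp; auto.
Qed.

Lemma Rabs_div x y : y <> 0 -> Rabs (x / y) = Rabs x / Rabs y.
Proof. intros. unfold Rdiv. rewrite Rabs_mult, Rabs_inv. reflexivity. Qed.

Lemma abs_lower x y : Rabs x - Rabs y <= Rabs (x + y).
Proof.
  pose proof (Rabs_triang (x + y) (- y)). rewrite Rabs_Ropp in H.
  replace (x + y + - y) with x in H by ring. lra.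
Qed.

Lemma lt_div_abs A C e : 0 < e -> 0 < C -> C < A * e -> 1 / e < A / C.
Proof.
  intros He HC H. apply (Rmult_lt_reg_r (e * C)). nra.
  replace (1 / e * (e * C)) with C by (field; lra).
  replace (A / C * (e * C)) with (A * e) by (field; lra). exact H.
Qed.

Lemma act_cont M x : mdet M <> 0 -> cont_at (act M) x.
Proof.
  intros HM. destruct M as [a b c d]. unfold mdet in HM; simpl in HM.
  intros e He. destruct x as [t|].
  - destruct (Req_dec (c * t + d) 0) as [HD|HD].
    +
      assert (Hc : c <> 0).
      { intro; subst. apply HM. replace d with 0 by lra. ring. }
      assert (HN : a * t + b <> 0).
      { intro HN. apply HM.
        assert (d = - c * t) by lra. assert (b = - a * t) by lra. subst. ring. }
      set (N := Rabs (a * t + b)).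
      assert (HNp : 0 < N) by (apply Rabs_pos_lt; auto).
      pose proof (Rabs_pos a) as Ha0. pose proof (Rabs_pos c) as Hc0.
      set (d1 := N / (2 * (Rabs a + 1))). set (d2 := N * e / (2 * (Rabs c + 1))).
      assert (Hd1 : 0 < d1) by (unfold d1; apply Rdiv_lt_0_compat; lra).
      assert (Hd2 : 0 < d2) by (unfold d2; apply Rdiv_lt_0_compat; nra).
      exists (Rmin d1 d2). split; [apply Rmin_glb_lt; auto|].
      intros z [s [-> Hs]]. simpl.
      destruct (Req_EM_T (c * t + d) 0) as [_|]; [|contradiction].
      destruct (Req_EM_T (c * s + d) 0) as [H0|H0]; [left; auto|right].
      eexists; split; [reflexivity|]. rewrite Rabs_div by auto.
      assert (Hs1 : Rabs (s - t) < d1) by (pose proof (Rmin_l d1 d2); lra).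
      assert (Hs2 : Rabs (s - t) < d2) by (pose proof (Rmin_r d1 d2); lra).
      assert (E1 : a * s + b = (a * t + b) + a * (s - t)) by ring.
      assert (E2 : c * s + d = c * (s - t)) by lra.
      assert (HA : N / 2 <= Rabs (a * s + b)).
      { rewrite E1. pose proof (abs_lower (a * t + b) (a * (s - t))). rewrite Rabs_mult in H.
        assert (Rabs a * Rabs (s - t) <= Rabs a * d1) by (apply Rmult_le_compat_l; lra).
        assert (Rabs a * d1 <= N / 2).
        { unfold d1. apply (Rmult_le_reg_r (2 * (Rabs a + 1))); [lra|].
          replace (Rabs a * (N / (2 * (Rabs a + 1))) * (2 * (Rabs a + 1))) with (Rabs a * N) by (field; lra).
          nra. }
        fold N in H. lra. }
      assert (HC : Rabs (c * s + d) < N * e / 2).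
      { rewrite E2, Rabs_mult.
        assert (Rabs c * Rabs (s - t) <= Rabs c * d2) by (apply Rmult_le_compat_l; lra).
        assert (Rabs c * d2 < N * e / 2).
        { unfold d2. apply (Rmult_lt_reg_r (2 * (Rabs c + 1))); [lra|].
          replace (Rabs c * (N * e / (2 * (Rabs c + 1))) * (2 * (Rabs c + 1))) with (Rabs c * (N * e)) by (field; lra).
          nra. }
        lra. }
      apply lt_div_abs; auto. apply Rabs_pos_lt; auto. nra.
    +
      assert (HF : continuity_pt (fun s => (a * s + b) / (c * s + d)) t) by (reg; auto).
      assert (HG : continuity_pt (fun s => c * s + d) t) by reg.
      destruct (cpt_elim _ _ HF e He) as [d1 [Hd1 H1]].
      destruct (cpt_elim _ _ HG (Rabs (c * t + d)) (Rabs_pos_lt _ HD)) as [d2 [Hd2 H2]].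
      exists (Rmin d1 d2). split; [apply Rmin_glb_lt; auto|].
      intros z [s [-> Hs]]. simpl.
      destruct (Req_EM_T (c * t + d) 0) as [|_]; [contradiction|].
      assert (Hs2 : Rabs (s - t) < d2) by (pose proof (Rmin_r d1 d2); lra).
      assert (Hs1 : Rabs (s - t) < d1) by (pose proof (Rmin_l d1 d2); lra).
      destruct (Req_EM_T (c * s + d) 0) as [H0|H0].
      * exfalso. specialize (H2 s Hs2). simpl in H2. rewrite H0 in H2.
        replace (0 - (c * t + d)) with (- (c * t + d)) in H2 by ring. rewrite Rabs_Ropp in H2. lra.
      * eexists; split; [reflexivity|]. apply (H1 s Hs1).
  - destruct (Req_dec c 0) as [Hc|Hc].
    + subst c. assert (Ha : a <> 0) by (intro; subst; apply HM; ring).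
      assert (Hd : d <> 0) by (intro; subst; apply HM; ring).
      pose proof (Rabs_pos_lt _ Ha) as Pa. pose proof (Rabs_pos_lt _ Hd) as Pd. pose proof (Rabs_pos b) as Pb.
      set (B := (Rabs d / e + Rabs b + 1) / Rabs a).
      assert (HB : 0 < B) by (unfold B; apply Rdiv_lt_0_compat; [|lra]; pose proof (Rdiv_lt_0_compat (Rabs d) e); lra).
      exists (1 / B). split; [apply Rdiv_lt_0_compat; lra|].
      simpl. destruct (Req_EM_T 0 0) as [_|]; [|lra].
      intros z [->|[s [-> Hs]]]; simpl.
      * destruct (Req_EM_T 0 0); [left; auto|lra].
      * right. replace (1 / (1 / B)) with B in Hs by (field; lra).
        destruct (Req_EM_T (0 * s + d) 0) as [H0|H0]; [lra|].
        eexists; split; [reflexivity|]. rewrite Rabs_div by auto.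
        replace (0 * s + d) with d by ring.
        apply lt_div_abs; auto.
        pose proof (abs_lower (a * s) b) as L. rewrite Rabs_mult in L.
        assert (L2 : Rabs a * B < Rabs a * Rabs s) by (apply Rmult_lt_compat_l; auto).
        replace (Rabs a * B) with (Rabs d / e + Rabs b + 1) in L2 by (unfold B; field; lra).
        assert (L3 : Rabs d / e * e = Rabs d) by (field; lra).
        assert (L4 : Rabs d / e < Rabs (a * s + b)) by lra.
        apply (Rmult_lt_compat_r e) in L4; auto. lra.
    + set (Dt := a * d - b * c).
      pose proof (Rabs_pos_lt _ Hc) as Pc. pose proof (Rabs_pos d) as Pd. pose proof (Rabs_pos Dt) as PD.
      set (B := (Rabs d + Rabs Dt / (Rabs c * e) + 1) / Rabs c).
      assert (Hq : 0 <= Rabs Dt / (Rabs c * e)) by (apply Rmult_le_pos; [lra|]; left; apply Rinv_0_lt_compat; nra).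
      assert (HB : 0 < B) by (unfold B; apply Rdiv_lt_0_compat; lra).
      exists (1 / B). split; [apply Rdiv_lt_0_compat; lra|].
      simpl. destruct (Req_EM_T c 0) as [|_]; [contradiction|].
      intros z [->|[s [-> Hs]]]; simpl.
      * destruct (Req_EM_T c 0) as [|_]; [contradiction|].
        eexists; split; [reflexivity|]. rewrite Rminus_diag, Rabs_R0; lra.
      * replace (1 / (1 / B)) with B in Hs by (field; lra).
        destruct (Req_EM_T c 0) as [|_]; [contradiction|].
        pose proof (abs_lower (c * s) d) as L. rewrite Rabs_mult in L.
        assert (L2 : Rabs c * B < Rabs c * Rabs s) by (apply Rmult_lt_compat_l; auto).
        replace (Rabs c * B) with (Rabs d + Rabs Dt / (Rabs c * e) + 1) in L2 by (unfold B; field; lra).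
        assert (HL : Rabs Dt / (Rabs c * e) < Rabs (c * s + d)) by lra.
        destruct (Req_EM_T (c * s + d) 0) as [H0|H0].
        { rewrite H0, Rabs_R0 in HL. lra. }
        eexists; split; [reflexivity|].
        replace ((a * s + b) / (c * s + d) - a / c) with (- Dt / (c * (c * s + d))) by (unfold Dt; field; auto).
        rewrite Rabs_div by (apply Rmult_integral_contrapositive; auto).
        rewrite Rabs_Ropp, Rabs_mult.
        assert (HP : 0 < Rabs (c * s + d)) by (apply Rabs_pos_lt; auto).
        apply (Rmult_lt_reg_r (Rabs c * Rabs (c * s + d))); [nra|].
        replace (Rabs Dt / (Rabs c * Rabs (c * s + d)) * (Rabs c * Rabs (c * s + d))) with (Rabs Dt) by (field; nra).
        apply (Rmult_lt_compat_r (Rabs c * e)) in HL; [|nra].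
        replace (Rabs Dt / (Rabs c * e) * (Rabs c * e)) with (Rabs Dt) in HL by (field; nra).
        nra.
Qed.

Lemma act_continuous M : mdet M <> 0 -> ext_continuous (act M).
Proof. intros H. apply cont_continuous. intros x. apply act_cont; auto. Qed.

Definition sg (t : R) : R := if Rlt_dec 0 t then 1 else if Rlt_dec t 0 then -1 else 0.

Lemma sg_pos t : 0 < t -> sg t = 1.
Proof. intros; unfold sg; destruct (Rlt_dec 0 t); lra. Qed.
Lemma sg_neg t : t < 0 -> sg t = -1.
Proof. intros; unfold sg; destruct (Rlt_dec 0 t); [lra|]; destruct (Rlt_dec t 0); lra. Qed.
Lemma sg_0 : sg 0 = 0.
Proof. unfold sg; destruct (Rlt_dec 0 0); [lra|]; destruct (Rlt_dec 0 0); lra. Qed.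

Lemma sg_abs t : sg t * Rabs t = t.
Proof.
  destruct (Rtotal_order t 0) as [H|[H|H]].
  - rewrite sg_neg, Rabs_left; auto; ring.
  - subst; rewrite sg_0; ring.
  - rewrite sg_pos, Rabs_right; auto; lra.
Qed.

Lemma sg_mult x y : sg (x * y) = sg x * sg y.
Proof.
  destruct (Rtotal_order x 0) as [H|[H|H]]; destruct (Rtotal_order y 0) as [G|[G|G]];
  subst; rewrite ?Rmult_0_l, ?Rmult_0_r, ?sg_0; try ring;
  first [rewrite (sg_pos (x*y)) by nra | rewrite (sg_neg (x*y)) by nra];
  rewrite ?(sg_pos x), ?(sg_neg x), ?(sg_pos y), ?(sg_neg y) by lra; ring.
Qed.

Lemma sg_sq l : l <> 0 -> sg l * sg l = 1.
Proof. intros H. destruct (Rtotal_order l 0) as [G|[G|G]]; [rewrite sg_neg|contradiction|rewrite sg_pos]; auto; ring. Qed.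

Definition pw (b t : R) : R := sg t * Rpower (Rabs t) b.

Lemma Rpower_pos x y : 0 < Rpower x y.
Proof. apply exp_pos. Qed.

Lemma pw_0 b : pw b 0 = 0.
Proof. unfold pw; rewrite sg_0; ring. Qed.

Lemma sg_pw b t : sg (pw b t) = sg t.
Proof.
  unfold pw. rewrite sg_mult, (sg_pos (Rpower (Rabs t) b)) by apply Rpower_pos.
  destruct (Rtotal_order t 0) as [G|[G|G]].
  - rewrite (sg_neg t) by lra; rewrite sg_neg by lra; ring.
  - subst; rewrite sg_0, sg_0; ring.
  - rewrite (sg_pos t) by lra; rewrite sg_pos by lra; ring.
Qed.

Lemma abs_pw b t : t <> 0 -> Rabs (pw b t) = Rpower (Rabs t) b.
Proof.
  intros H. unfold pw. rewrite Rabs_mult, (Rabs_right (Rpower _ _)) by (left; apply Rpower_pos).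
  destruct (Rtotal_order t 0) as [G|[G|G]]; [rewrite sg_neg, (Rabs_left (-1)) by lra|contradiction|rewrite sg_pos, Rabs_R1 by lra]; ring.
Qed.

Lemma pw_inv b t : b <> 0 -> pw (1 / b) (pw b t) = t.
Proof.
  intros Hb. destruct (Req_dec t 0) as [->|Ht].
  - rewrite !pw_0. reflexivity.
  - unfold pw at 1. rewrite sg_pw, abs_pw by auto. rewrite Rpower_mult.
    replace (b * (1 / b)) with 1 by (field; auto). rewrite Rpower_1 by (apply Rabs_pos_lt; auto).
    apply sg_abs.
Qed.

Lemma pw_scale b l t : l <> 0 -> pw b (l * t) = (sg l * Rpower (Rabs l) b) * pw b t.
Proof.
  intros Hl. destruct (Req_dec t 0) as [->|Ht].
  - rewrite Rmult_0_r, !pw_0. ring.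
  - unfold pw. rewrite sg_mult, Rabs_mult, <- Rpower_mult_distr by (apply Rabs_pos_lt; auto). ring.
Qed.

Definition gp (b : R) (x : ext) : ext :=
  match x with Some t => Some (pw b t) | None => None end.

Lemma gp_scale b l x : l <> 0 -> gp b (scale l x) = scale (sg l * Rpower (Rabs l) b) (gp b x).
Proof. intros Hl; destruct x as [t|]; simpl; auto. rewrite pw_scale; auto. Qed.

Lemma gp_inv b x : b <> 0 -> gp (1 / b) (gp b x) = x.
Proof. intros Hb; destruct x as [t|]; simpl; auto. rewrite pw_inv; auto. Qed.

Lemma Rpower_cont b t : 0 < t -> continuity_pt (fun s => Rpower s b) t.
Proof.
  intros Ht. apply derivable_continuous_pt. exact (exist _ _ (derivable_pt_lim_power t b Ht)).
Qed.

Lemma pw_pos b s : 0 < s -> pw b s = Rpower s b.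
Proof. intros; unfold pw; rewrite sg_pos, Rabs_right by lra; ring. Qed.
Lemma pw_neg b s : s < 0 -> pw b s = - Rpower (- s) b.
Proof. intros; unfold pw; rewrite sg_neg, Rabs_left by lra; ring. Qed.

Lemma Rpower_lt_inv x y b : 0 < b -> 0 < x -> 0 < y -> Rpower x b < Rpower y b -> x < y.
Proof.
  intros Hb Hx Hy H. destruct (Rlt_le_dec x y) as [G|G]; auto.
  destruct G as [G|G].
  - pose proof (Rlt_Rpower_l y x b Hb (conj Hy G)). lra.
  - subst; lra.
Qed.

Lemma gp_cont b x : 0 < b -> cont_at (gp b) x.
Proof.
  intros Hb e He. destruct x as [t|].
  - destruct (Rtotal_order t 0) as [Ht|[Ht|Ht]].
    + destruct (cpt_elim _ _ (Rpower_cont b (-t) ltac:(lra)) e He) as [d [Hd H]].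
      exists (Rmin d (- t)). split; [apply Rmin_glb_lt; lra|].
      intros z [s [-> Hs]]. simpl. eexists; split; [reflexivity|].
      pose proof (Rmin_l d (-t)). pose proof (Rmin_r d (-t)).
      assert (Hs' : s < 0) by (pose proof (Rle_abs (s - t)); pose proof (Rabs_Ropp (s - t)); pose proof (Rle_abs (-(s-t))); lra).
      rewrite !pw_neg by lra.
      replace (- Rpower (- s) b - - Rpower (- t) b) with (- (Rpower (- s) b - Rpower (- t) b)) by ring.
      rewrite Rabs_Ropp. apply H. replace (- s - - t) with (- (s - t)) by ring. rewrite Rabs_Ropp. lra.
    + subst t. set (d := Rpower e (1 / b)).
      assert (Hd : 0 < d) by apply Rpower_pos.
      exists d. split; auto. intros z [s [-> Hs]]. simpl. eexists; split; [reflexivity|].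
      rewrite pw_0, Rminus_0_r. rewrite Rminus_0_r in Hs.
      destruct (Req_dec s 0) as [->|Hs0].
      * rewrite pw_0, Rabs_R0; auto.
      * rewrite abs_pw by auto.
        replace e with (Rpower d b) by (unfold d; rewrite Rpower_mult; replace (1 / b * b) with 1 by (field; lra); apply Rpower_1; auto).
        apply Rlt_Rpower_l; auto. split; auto. apply Rabs_pos_lt; auto.
    + destruct (cpt_elim _ _ (Rpower_cont b t Ht) e He) as [d [Hd H]].
      exists (Rmin d t). split; [apply Rmin_glb_lt; lra|].
      intros z [s [-> Hs]]. simpl. eexists; split; [reflexivity|].
      pose proof (Rmin_l d t). pose proof (Rmin_r d t).
      assert (Hs' : 0 < s) by (pose proof (Rabs_Ropp (s - t)); pose proof (Rle_abs (-(s-t))); lra).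
      rewrite !pw_pos by lra. apply H. lra.
  - set (B := Rpower (1 / e) (1 / b)).
    assert (HB : 0 < B) by apply Rpower_pos.
    exists (1 / B). split; [apply Rdiv_lt_0_compat; lra|].
    intros z [->|[s [-> Hs]]]; simpl; [left; auto|right].
    replace (1 / (1 / B)) with B in Hs by (field; lra).
    eexists; split; [reflexivity|].
    assert (Hs0 : s <> 0) by (intro; subst; rewrite Rabs_R0 in Hs; lra).
    rewrite abs_pw by auto.
    replace (1 / e) with (Rpower B b) by (unfold B; rewrite Rpower_mult; replace (1 / b * b) with 1 by (field; lra); apply Rpower_1; apply Rdiv_lt_0_compat; lra).
    apply Rlt_Rpower_l; auto.
Qed.

Lemma gp_homeo b : 0 < b -> ext_homeomorphism (gp b).
Proof.
  intros Hb. exists (gp (1 / b)). split; [|split; [|split]].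
  - intros x; apply gp_inv; lra.
  - intros y. pose proof (gp_inv (1 / b) y) as H. replace (1 / (1 / b)) with b in H by (field; lra).
    apply H. apply Rgt_not_eq, Rdiv_lt_0_compat; lra.
  - apply cont_continuous; intros; apply gp_cont; auto.
  - apply cont_continuous; intros; apply gp_cont. apply Rdiv_lt_0_compat; lra.
Qed.

Definition Jm := Mat2 0 1 1 0.
Lemma Jm_det : mdet Jm <> 0.
Proof. unfold mdet, Jm; simpl; lra. Qed.

Lemma J_invol x : act Jm (act Jm x) = x.
Proof.
  rewrite <- act_mmul by apply Jm_det.
  replace (mmul Jm Jm) with (Mat2 1 0 0 1) by (unfold mmul, Jm; simpl; f_equal; ring).
  apply act_id.
Qed.

Lemma J_homeo : ext_homeomorphism (act Jm).
Proof.
  exists (act Jm). split; [|split; [|split]]; try (intros; apply J_invol);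
  apply act_continuous, Jm_det.
Qed.

Lemma J_scale m x : m <> 0 -> act Jm (scale m x) = scale (1 / m) (act Jm x).
Proof.
  intros Hm. destruct x as [t|]; simpl.
  - destruct (Req_EM_T (1 * (m * t) + 0) 0) as [H|H]; destruct (Req_EM_T (1 * t + 0) 0) as [G|G]; simpl; auto.
    + exfalso. apply G. replace (1 * (m * t) + 0) with (m * t) in H by ring.
      destruct (Rmult_integral _ _ H); lra.
    + exfalso. apply H. replace t with 0 by lra. ring.
    + f_equal. field. split; auto. intro; apply G; lra.
  - destruct (Req_EM_T 1 0); [lra|]. simpl. f_equal. unfold Rdiv. ring.
Qed.

Lemma act_homeo M : mdet M <> 0 -> ext_homeomorphism (act M).
Proof.
  intros H. exists (act (minv M)). split; [|split; [|split]].
  - intros; apply act_minv_l; auto.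
  - intros; apply act_minv_r; auto.
  - apply act_continuous; auto.
  - apply act_continuous, mdet_minv; auto.
Qed.

Lemma mu_eq l a : l <> 0 -> sg l * Rpower (Rabs l) (1 + a) = l * Rpower (Rabs l) a.
Proof.
  intros Hl. rewrite Rpower_plus, Rpower_1 by (apply Rabs_pos_lt; auto).
  rewrite <- Rmult_assoc, sg_abs. reflexivity.
Qed.

Definition Gm (a : R) : ext -> ext :=
  if Rlt_dec 0 (1 + a) then gp (1 + a) else fun x => act Jm (gp (- (1 + a)) x).

Lemma Gm_homeo a : a <> -1 -> ext_homeomorphism (Gm a).
Proof.
  intros Ha. unfold Gm. destruct (Rlt_dec 0 (1 + a)).
  - apply gp_homeo; auto.
  - apply homeo_comp; [apply J_homeo|apply gp_homeo; lra].
Qed.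

Lemma sg_nz l : l <> 0 -> sg l <> 0.
Proof. intros H. destruct (Rtotal_order l 0) as [G|[G|G]]; [rewrite sg_neg|contradiction|rewrite sg_pos]; auto; lra. Qed.

Lemma Gm_scale a l x : a <> -1 -> l <> 0 ->
  Gm a (scale l x) = scale (l * Rpower (Rabs l) a) (Gm a x).
Proof.
  intros Ha Hl. unfold Gm. destruct (Rlt_dec 0 (1 + a)).
  - rewrite gp_scale, mu_eq; auto.
  - rewrite gp_scale by auto. rewrite J_scale.
    + f_equal. rewrite <- mu_eq by auto. rewrite Rpower_Ropp.
      replace 1 with (sg l * sg l) at 1 by (apply sg_sq; auto).
      field. split; [apply Rgt_not_eq, Rpower_pos|apply sg_nz; auto].
    + apply Rmult_integral_contrapositive. split; [apply sg_nz; auto|apply Rgt_not_eq, Rpower_pos].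
Qed.

Lemma backward (I : Type) (S T : mat2) (p1 p2 q1 q2 : I -> R)
  (hS : GL2 S) (hT : GL2 T)
  (hp1 : forall r, p1 r <> 0) (hp2 : forall r, p2 r <> 0)
  (hq1 : forall r, q1 r <> 0) (hq2 : forall r, q2 r <> 0) :
  (exists alpha : R, alpha <> -1 /\
     forall r : I,
       q1 r / q2 r = (p1 r / p2 r) * Rpower (Rabs (p1 r / p2 r)) alpha) ->
  (exists f : ext -> ext, ext_homeomorphism f /\
     forall (r : I) (x : ext),
       f (act (mmul (mmul S (diag2 (p1 r) (p2 r))) (minv S)) x) =
       act (mmul (mmul T (diag2 (q1 r) (q2 r))) (minv T)) (f x)).
Proof.
  intros [a [Ha Hr]]. unfold GL2 in *.
  exists (fun x => act T (Gm a (act (minv S) x))). split.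
  - apply homeo_comp; [apply act_homeo; auto|].
    apply homeo_comp; [apply Gm_homeo; auto|apply act_homeo, mdet_minv; auto].
  - intros r x.
    rewrite act_conj by (auto; apply mdet_diag; auto).
    rewrite act_conj by (auto; apply mdet_diag; auto).
    rewrite act_minv_l, act_minv_l by auto.
    rewrite !act_diag by auto.
    rewrite Gm_scale; auto.
    + rewrite Hr. reflexivity.
    + unfold Rdiv; apply Rmult_integral_contrapositive; split; auto; apply Rinv_neq_0_compat; auto.
Qed.

Lemma trans_nat (K : R -> R) a b : (forall x, K (x + a) = K x + b) ->
  forall n x, K (x + INR n * a) = K x + INR n * b.
Proof.
  intros H n. induction n as [|n IH]; intros x.
  - simpl. rewrite Rmult_0_l, Rmult_0_l, !Rplus_0_r. reflexivity.
  - rewrite S_INR. replace (x + (INR n + 1) * a) with ((x + INR n * a) + a) by ring.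
    rewrite H, IH. ring.
Qed.

Lemma trans_Z (K : R -> R) a b : (forall x, K (x + a) = K x + b) ->
  forall z x, K (x + IZR z * a) = K x + IZR z * b.
Proof.
  intros H z x. destruct z as [|p|p].
  - simpl. rewrite !Rmult_0_l, !Rplus_0_r. reflexivity.
  - rewrite <- positive_nat_Z, <- INR_IZR_INZ. apply trans_nat; auto.
  - rewrite <- Pos2Z.opp_pos, opp_IZR, <- positive_nat_Z, <- INR_IZR_INZ.
    set (n := INR (Pos.to_nat p)).
    pose proof (trans_nat K a b H (Pos.to_nat p) (x + - n * a)) as E. fold n in E.
    replace (x + - n * a + n * a) with x in E by ring. lra.
Qed.

Lemma ratio_pos (K : R -> R) a b a' b' :
  (forall x y, x < y -> K x < K y) ->
  (forall x, K (x + a) = K x + b) -> (forall x, K (x + a') = K x + b') ->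
  0 < a -> 0 < a' -> ~ (b * a' < b' * a).
Proof.
  intros Hi H H' Ha Ha' Hlt.
  assert (Hb : 0 < b).
  { pose proof (Hi 0 (0 + a) ltac:(lra)). rewrite H in H0. lra. }
  set (dl := b' - b * a' / a).
  assert (Hdl : 0 < dl).
  { unfold dl. apply (Rmult_lt_reg_r a); auto.
    replace ((b' - b * a' / a) * a) with (b' * a - b * a') by (field; lra). lra. }
  destruct (archimed (b / dl)) as [Hn1 _]. set (n := IZR (up (b / dl))) in *.
  assert (Hn : b < n * dl).
  { apply (Rmult_lt_compat_r dl) in Hn1; auto.
    replace (b / dl * dl) with b in Hn1 by (field; lra). lra. }
  destruct (archimed (n * a' / a)) as [Hm1 Hm2]. set (m := IZR (up (n * a' / a))) in *.
  assert (Hma : n * a' < m * a).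
  { apply (Rmult_lt_compat_r a) in Hm1; auto.
    replace (n * a' / a * a) with (n * a') in Hm1 by (field; lra). lra. }
  pose proof (Hi (0 + n * a') (0 + m * a) ltac:(lra)) as HK.
  unfold n in HK; unfold m in HK.
  rewrite (trans_Z K a' b' H' (up (b / dl)) 0), (trans_Z K a b H (up (n * a' / a)) 0) in HK.
  fold n m in HK.
  assert (Hmb : m * b <= (n * a' / a + 1) * b) by (apply Rmult_le_compat_r; lra).
  assert (E : (n * a' / a + 1) * b = n * (b * a' / a) + b) by (field; lra).
  assert (E2 : n * dl = n * b' - n * (b * a' / a)) by (unfold dl; ring).
  lra.
Qed.

Lemma ratio_eq (K : R -> R) a b a' b' :
  (forall x y, x < y -> K x < K y) ->
  (forall x, K (x + a) = K x + b) -> (forall x, K (x + a') = K x + b') ->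
  0 < a -> 0 < a' -> b * a' = b' * a.
Proof.
  intros Hi H H' Ha Ha'.
  pose proof (ratio_pos K a b a' b' Hi H H' Ha Ha').
  pose proof (ratio_pos K a' b' a b Hi H' H Ha' Ha). lra.
Qed.

Lemma trans_neg (K : R -> R) a b : (forall x, K (x + a) = K x + b) -> (forall x, K (x + - a) = K x + - b).
Proof. intros H x. pose proof (H (x + - a)). replace (x + - a + a) with x in H0 by ring. lra. Qed.

Lemma ratio_gen (K : R -> R) a b a' b' :
  (forall x y, x < y -> K x < K y) ->
  (forall x, K (x + a) = K x + b) -> (forall x, K (x + a') = K x + b') ->
  a <> 0 -> b * a' = b' * a.
Proof.
  intros Hi H H' Ha.
  destruct (Rtotal_order a' 0) as [G|[G|G]].
  - pose proof (trans_neg K a' b' H') as H2.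
    destruct (Rtotal_order a 0) as [F|[F|F]]; [|contradiction|].
    + pose proof (ratio_eq K (-a) (-b) (-a') (-b') Hi (trans_neg K a b H) H2 ltac:(lra) ltac:(lra)). lra.
    + pose proof (ratio_eq K a b (-a') (-b') Hi H H2 ltac:(lra) ltac:(lra)). lra.
  - subst a'. pose proof (H' 0). rewrite Rplus_0_r in H0. assert (b' = 0) by lra. subst; ring.
  - destruct (Rtotal_order a 0) as [F|[F|F]]; [|contradiction|].
    + pose proof (ratio_eq K (-a) (-b) a' b' Hi (trans_neg K a b H) H' ltac:(lra) ltac:(lra)). lra.
    + pose proof (ratio_eq K a b a' b' Hi H H' ltac:(lra) ltac:(lra)). lra.
Qed.

Lemma mono (K : R -> R) : continuity K -> (forall x y, K x = K y -> x = y) ->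
  (forall x y, x < y -> K x < K y) \/ (forall x y, x < y -> K y < K x).
Proof.
  intros Hc Hinj. apply NNPP. intros Hn. apply not_or_and in Hn. destruct Hn as [N1 N2].
  apply not_all_ex_not in N1. destruct N1 as [x1 N1]. apply not_all_ex_not in N1. destruct N1 as [y1 N1].
  apply imply_to_and in N1. destruct N1 as [L1 N1].
  apply not_all_ex_not in N2. destruct N2 as [x2 N2]. apply not_all_ex_not in N2. destruct N2 as [y2 N2].
  apply imply_to_and in N2. destruct N2 as [L2 N2].
  assert (K1 : K y1 < K x1).
  { destruct (Rtotal_order (K y1) (K x1)) as [G|[G|G]]; auto.
    - apply Hinj in G; lra.
    - lra. }
  assert (K2 : K x2 < K y2).
  { destruct (Rtotal_order (K y2) (K x2)) as [G|[G|G]]; auto.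
    - lra.
    - apply Hinj in G; lra. }
  set (G := fun s => K ((1 - s) * y1 + s * y2) - K ((1 - s) * x1 + s * x2)).
  assert (HG : continuity G).
  { intros s. unfold G. apply (continuity_pt_minus (fun s => K ((1 - s) * y1 + s * y2)) (fun s => K ((1 - s) * x1 + s * x2))).
    - apply (continuity_pt_comp (fun s => (1 - s) * y1 + s * y2) K). reg. apply Hc.
    - apply (continuity_pt_comp (fun s => (1 - s) * x1 + s * x2) K). reg. apply Hc. }
  destruct (IVT G 0 1 HG ltac:(lra)) as [s [Hs Hz]].
  - unfold G. replace ((1 - 0) * y1 + 0 * y2) with y1 by ring. replace ((1 - 0) * x1 + 0 * x2) with x1 by ring. lra.
  - unfold G. replace ((1 - 1) * y1 + 1 * y2) with y2 by ring. replace ((1 - 1) * x1 + 1 * x2) with x2 by ring. lra.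
  - unfold G in Hz. apply Rminus_diag_uniq in Hz. apply Hinj in Hz.
    assert (P2 : 0 <= s * (y2 - x2)) by (apply Rmult_le_pos; lra).
    destruct (Req_dec s 1) as [->|Hs1].
    + lra.
    + assert (P1 : 0 < (1 - s) * (y1 - x1)) by (apply Rmult_lt_0_compat; lra).
      lra.
Qed.

Definition phi (h : ext -> ext) (t : R) : R := match h (Some t) with Some u => u | None => 0 end.

Definition regular (h : ext -> ext) : Prop :=
  (forall x y, h x = h y -> x = y) /\ ext_continuous h /\
  (forall t, t <> 0 -> exists u, h (Some t) = Some u /\ u <> 0) /\
  (forall u, u <> 0 -> exists t, t <> 0 /\ h (Some t) = Some u).

Lemma phi_spec h t : regular h -> t <> 0 -> h (Some t) = Some (phi h t) /\ phi h t <> 0.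
Proof.
  intros [_ [_ [H _]]] Ht. destruct (H t Ht) as [u [Hu Hu0]]. unfold phi. rewrite Hu. auto.
Qed.

Definition Ff (h : ext -> ext) (x : R) : R := phi h (exp x).

Lemma Ff_spec h x : regular h -> h (Some (exp x)) = Some (Ff h x) /\ Ff h x <> 0.
Proof. intros Hr. apply phi_spec; auto. apply Rgt_not_eq, exp_pos. Qed.

Lemma Ff_cont h : regular h -> continuity (Ff h).
Proof.
  intros Hr x. apply cpt_intro. intros e He.
  destruct (Ff_spec h x Hr) as [E1 _].
  destruct Hr as [Hinj [Hc _]].
  destruct (continuous_real h (exp x) (Ff h x) Hc E1 e He) as [d [Hd H]].
  assert (Hex : continuity_pt exp x) by (apply derivable_continuous_pt, derivable_pt_exp).
  destruct (cpt_elim _ _ Hex d Hd) as [d2 [Hd2 H2]].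
  exists d2. split; auto. intros y Hy.
  destruct (H (exp y) (H2 y Hy)) as [v [Ev Hv]].
  unfold Ff at 1, phi. rewrite Ev. exact Hv.
Qed.

Lemma Ff_sign h x y : regular h -> 0 < Ff h x * Ff h y.
Proof.
  intros Hr. apply Rnot_le_lt. intros Hle.
  assert (Hz : forall z, Ff h z <> 0) by (intros z; apply (Ff_spec h z Hr)).
  destruct (Rle_dec x y) as [Hxy|Hxy].
  - destruct (IVT_cor (Ff h) x y (Ff_cont h Hr) Hxy Hle) as [z [_ Hz0]]. apply (Hz z Hz0).
  - destruct (IVT_cor (Ff h) y x (Ff_cont h Hr) ltac:(lra) ltac:(rewrite Rmult_comm; lra)) as [z [_ Hz0]].
    apply (Hz z Hz0).
Qed.

Lemma phi_rel h l m t : regular h -> l <> 0 -> t <> 0 ->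
  (forall x, h (scale l x) = scale m (h x)) -> phi h (l * t) = m * phi h t.
Proof.
  intros Hr Hl Ht Hrel. pose proof (Hrel (Some t)) as E. simpl in E.
  destruct (phi_spec h t Hr Ht) as [E1 _].
  destruct (phi_spec h (l * t) Hr ltac:(apply Rmult_integral_contrapositive; auto)) as [E2 _].
  rewrite E1, E2 in E. simpl in E. injection E. auto.
Qed.

Lemma sign_pos h l m : regular h -> 0 < l ->
  (forall x, h (scale l x) = scale m (h x)) -> 0 < m.
Proof.
  intros Hr Hl Hrel.
  pose proof (Ff_sign h (0 + ln l) 0 Hr) as S1.
  unfold Ff at 1 in S1.
  replace (exp (0 + ln l)) with (l * exp 0) in S1 by (rewrite exp_plus, exp_ln by auto; ring).
  rewrite phi_rel with (m := m) in S1 by (auto; try lra; apply Rgt_not_eq, exp_pos).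
  fold (Ff h 0) in S1.
  destruct (Ff_spec h 0 Hr) as [_ Hn].
  assert (0 < Ff h 0 * Ff h 0) by (apply Rsqr_pos_lt; auto).
  nra.
Qed.

Lemma sign_neg h l m : regular h -> l < 0 -> m <> 0 ->
  (forall x, h (scale l x) = scale m (h x)) -> m < 0.
Proof.
  intros Hr Hl Hm Hrel. destruct (Rtotal_order m 0) as [G|[G|G]]; auto; [contradiction|exfalso].
  pose proof Hr as [_ [_ [_ Hsurj]]].
  destruct (Ff_spec h 0 Hr) as [_ Hn].
  destruct (Hsurj (- Ff h 0) ltac:(intro; apply Hn; lra)) as [t [Ht Et]].
  destruct (phi_spec h t Hr Ht) as [E1 _]. rewrite Et in E1. injection E1 as E1.
  assert (Q : 0 < Ff h 0 * Ff h 0) by (apply Rsqr_pos_lt; auto).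
  destruct (Rtotal_order t 0) as [T|[T|T]]; [|contradiction|].
  - assert (Htl : 0 < t / l) by (apply Rdiv_neg_neg; auto).
    assert (E2 : phi h t = m * Ff h (ln (t / l))).
    { unfold Ff. rewrite exp_ln by auto. rewrite <- phi_rel with (l := l) by (auto; lra).
      f_equal. field. lra. }
    pose proof (Ff_sign h (ln (t / l)) 0 Hr). rewrite <- E1 in E2. nra.
  - pose proof (Ff_sign h (ln t) 0 Hr) as S1. unfold Ff at 1 in S1. rewrite exp_ln in S1 by auto.
    rewrite <- E1 in S1. lra.
Qed.

Definition Kf (h : ext -> ext) (x : R) : R := ln (Rabs (Ff h x)).

Lemma Kf_trans h l m : regular h -> l <> 0 -> m <> 0 ->
  (forall x, h (scale l x) = scale m (h x)) ->
  forall x, Kf h (x + 2 * ln (Rabs l)) = Kf h x + 2 * ln (Rabs m).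
Proof.
  intros Hr Hl Hm Hrel x. unfold Kf, Ff.
  assert (He : exp (x + 2 * ln (Rabs l)) = l * (l * exp x)).
  { replace (x + 2 * ln (Rabs l)) with (x + (ln (Rabs l) + ln (Rabs l))) by ring.
    rewrite !exp_plus, exp_ln by (apply Rabs_pos_lt; auto).
    rewrite <- Rabs_mult, Rabs_right by (apply Rle_ge; nra). ring. }
  pose proof (exp_pos x) as Hx.
  rewrite He. rewrite (phi_rel h l m) by (auto; apply Rmult_integral_contrapositive; split; lra).
  rewrite (phi_rel h l m) by (auto; lra).
  destruct (phi_spec h (exp x) Hr ltac:(lra)) as [_ Hp].
  rewrite !Rabs_mult. rewrite !ln_mult by (try apply Rmult_lt_0_compat; apply Rabs_pos_lt; auto). ring.
Qed.

Lemma Kf_cont h : regular h -> continuity (Kf h).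
Proof.
  intros Hr x. apply cpt_intro. intros e He.
  destruct (Ff_spec h x Hr) as [_ Hn].
  assert (Hp : 0 < Rabs (Ff h x)) by (apply Rabs_pos_lt; auto).
  destruct (ln_continue _ Hp e He) as [a [Ha Hln]].
  assert (HA : continuity_pt (fun z => Rabs (Ff h z)) x).
  { apply (continuity_pt_comp (Ff h) Rabs). apply Ff_cont; auto. apply Rcontinuity_abs. }
  destruct (cpt_elim _ _ HA a Ha) as [d [Hd H]].
  exists d. split; auto. intros y Hy. unfold Kf.
  destruct (Req_dec (Rabs (Ff h y)) (Rabs (Ff h x))) as [E|E].
  - rewrite E, Rminus_diag, Rabs_R0; auto.
  - apply (Hln (Rabs (Ff h y))). split.
    + split; [apply Rabs_pos_lt; apply (Ff_spec h y Hr)|auto].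
    + apply H; auto.
Qed.

Lemma Kf_inj h x y : regular h -> Kf h x = Kf h y -> x = y.
Proof.
  intros Hr E. unfold Kf in E.
  destruct (Ff_spec h x Hr) as [Ex Nx]. destruct (Ff_spec h y Hr) as [Ey Ny].
  apply ln_inv in E; try (apply Rabs_pos_lt; auto).
  pose proof (Ff_sign h x y Hr) as S.
  assert (Ff h x = Ff h y).
  { destruct (Rcase_abs (Ff h x)) as [A|A]; destruct (Rcase_abs (Ff h y)) as [B|B];
    [rewrite !Rabs_left in E by lra|rewrite Rabs_left, Rabs_right in E by lra|
     rewrite Rabs_right, Rabs_left in E by lra|rewrite !Rabs_right in E by lra]; nra. }
  destruct Hr as [Hinj _]. rewrite <- H in Ey. rewrite <- Ey in Ex.
  apply Hinj in Ex. injection Ex. apply exp_inv.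
Qed.

Lemma scale_1 x : scale 1 x = x.
Proof. destruct x; simpl; auto. rewrite Rmult_1_l; auto. Qed.

Lemma fix_scale l x : l <> 1 -> scale l x = x -> x = Some 0 \/ x = None.
Proof.
  intros Hl E. destruct x as [t|]; auto. left. simpl in E. injection E as E.
  f_equal. apply (Rmult_eq_reg_l (l - 1)); [|lra]. lra.
Qed.

Lemma core (I : Type) (l m : I -> R) (h hi : ext -> ext) :
  (forall r, l r <> 0) -> (forall r, m r <> 0) ->
  (forall y, h (hi y) = y) -> (forall x, hi (h x) = x) -> ext_continuous h ->
  (forall r x, h (scale (l r) x) = scale (m r) (h x)) ->
  exists a, a <> -1 /\ forall r, m r = l r * Rpower (Rabs (l r)) a.
Proof.
  intros Hl Hm Hhi Hih Hc Hrel.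
  assert (Hinj : forall x y, h x = h y -> x = y).
  { intros x y E. rewrite <- (Hih x), <- (Hih y), E. reflexivity. }
  assert (M1 : forall r, l r = 1 -> m r = 1).
  { intros r E. pose proof (Hrel r (hi (Some 1))) as F. rewrite E, scale_1, Hhi in F.
    simpl in F. injection F. lra. }
  destruct (classic (exists r0, l r0 <> 1)) as [[r0 H0]|Hno].
  2:{ exists 0. split; [lra|]. intros r.
      assert (E : l r = 1) by (apply NNPP; intro; apply Hno; exists r; auto).
      rewrite (M1 r E), E, Rabs_R1, Rpower_O by lra. ring. }
  assert (Hm0 : m r0 <> 1).
  { intro E. pose proof (Hrel r0 (Some 1)) as F. rewrite E, scale_1 in F.
    apply Hinj in F. simpl in F. injection F. lra. }
  assert (A : h (Some 0) = Some 0 \/ h (Some 0) = None).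
  { apply (fix_scale (m r0)); auto. rewrite <- Hrel. simpl. rewrite Rmult_0_r. reflexivity. }
  assert (B : h None = Some 0 \/ h None = None).
  { apply (fix_scale (m r0)); auto. rewrite <- Hrel. reflexivity. }
  assert (AB : h (Some 0) <> h None) by (intro E; apply Hinj in E; discriminate).
  assert (Cov : forall y, (y = Some 0 \/ y = None) -> (h (Some 0) = y \/ h None = y)).
  { intros y [-> | ->]; destruct A as [A|A]; destruct B as [B|B]; rewrite ?A, ?B in AB |- *;
    auto; congruence. }
  assert (Hreg : regular h).
  { split; [auto|split; [auto|split]].
    - intros t Ht. destruct (h (Some t)) as [u|] eqn:E.
      + exists u. split; auto. intro; subst u.
        destruct (Cov (Some 0) (or_introl eq_refl)) as [C|C]; rewrite <- C in E; apply Hinj in E;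
        [injection E; auto|discriminate].
      + exfalso. destruct (Cov None (or_intror eq_refl)) as [C|C]; rewrite <- C in E; apply Hinj in E;
        [injection E; auto|discriminate].
    - intros u Hu. destruct (hi (Some u)) as [t|] eqn:E.
      + exists t. split.
        * intro; subst t. pose proof (Hhi (Some u)) as F. rewrite E in F.
          destruct A as [A|A]; rewrite A in F; [injection F; auto|discriminate].
        * rewrite <- E. apply Hhi.
      + exfalso. pose proof (Hhi (Some u)) as F. rewrite E in F.
        destruct B as [B|B]; rewrite B in F; [injection F; auto|discriminate]. }
  destruct (classic (exists r1, Rabs (l r1) <> 1)) as [[r1 H1]|Hno1].
  2:{ exists 0. split; [lra|]. intros r.
      rewrite Rpower_O by (apply Rabs_pos_lt; auto). rewrite Rmult_1_r.
      assert (E : Rabs (l r) = 1) by (apply NNPP; intro; apply Hno1; exists r; auto).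
      destruct (Rcase_abs (l r)) as [N|N]; [rewrite Rabs_left in E by lra|rewrite Rabs_right in E by lra].
      - assert (Ll : l r = -1) by lra.
        pose proof (phi_rel h (l r) (m r) 1 Hreg (Hl r) ltac:(lra) (Hrel r)) as P1.
        pose proof (phi_rel h (l r) (m r) (-1) Hreg (Hl r) ltac:(lra) (Hrel r)) as P2.
        rewrite Ll in P1, P2. replace (-1 * 1) with (-1) in P1 by ring. replace (-1 * -1) with 1 in P2 by ring.
        destruct (phi_spec h 1 Hreg ltac:(lra)) as [Q1 N1].
        destruct (phi_spec h (-1) Hreg ltac:(lra)) as [Q2 N2].
        rewrite P1 in P2.
        assert (Hmm : m r * m r = 1).
        { apply (Rmult_eq_reg_r (phi h 1)); auto. lra. }
        rewrite Ll. destruct (Req_dec (m r) 1) as [Em|Em].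
        + exfalso. rewrite Em, Rmult_1_l in P1. rewrite P1 in Q2. rewrite <- Q2 in Q1.
          apply Hinj in Q1. injection Q1. lra.
        + nra.
      - rewrite M1; lra. }
  set (K := Kf h).
  assert (Tr : forall r x, K (x + 2 * ln (Rabs (l r))) = K x + 2 * ln (Rabs (m r))).
  { intros r x. apply Kf_trans; auto. }
  set (a1 := 2 * ln (Rabs (l r1))).
  assert (Ha1 : a1 <> 0).
  { unfold a1. pose proof (ln_neq_0 (Rabs (l r1)) H1 (Rabs_pos_lt _ (Hl r1))). lra. }
  assert (E : forall r, ln (Rabs (m r1)) * ln (Rabs (l r)) = ln (Rabs (m r)) * ln (Rabs (l r1))).
  { intros r. destruct (mono K (Kf_cont h Hreg) (fun x y => Kf_inj h x y Hreg)) as [Inc|Dec].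
    - pose proof (ratio_gen K a1 _ _ _ Inc (Tr r1) (Tr r) Ha1). unfold a1 in H. nra.
    - assert (Inc : forall x y, x < y -> - K x < - K y) by (intros x y Hxy; specialize (Dec x y Hxy); lra).
      assert (T1 : forall x, - K (x + a1) = - K x + - (2 * ln (Rabs (m r1)))) by (intros; unfold a1; rewrite Tr; ring).
      assert (T2 : forall x, - K (x + 2 * ln (Rabs (l r))) = - K x + - (2 * ln (Rabs (m r)))) by (intros; rewrite Tr; ring).
      pose proof (ratio_gen (fun x => - K x) a1 _ _ _ Inc T1 T2 Ha1). unfold a1 in H. nra. }
  assert (Hl1 : ln (Rabs (l r1)) <> 0) by (unfold a1 in Ha1; lra).
  assert (Hm1 : ln (Rabs (m r1)) <> 0).
  { intro Z. pose proof (Tr r1 0) as T. rewrite Z, Rmult_0_r, Rplus_0_r, Rplus_0_l in T.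
    apply (Kf_inj h) in T; [|auto]. unfold a1 in Ha1. lra. }
  set (c := ln (Rabs (m r1)) / ln (Rabs (l r1))).
  assert (Hc0 : c <> 0) by (unfold c; unfold Rdiv; apply Rmult_integral_contrapositive; split; auto; apply Rinv_neq_0_compat; auto).
  exists (c - 1). split; [lra|]. intros r.
  assert (Lr : ln (Rabs (m r)) = c * ln (Rabs (l r))).
  { unfold c. apply (Rmult_eq_reg_r (ln (Rabs (l r1)))); auto. rewrite <- E. field. auto. }
  assert (Am : Rabs (m r) = Rpower (Rabs (l r)) c).
  { unfold Rpower. rewrite <- Lr. rewrite exp_ln; auto. apply Rabs_pos_lt; auto. }
  assert (Sg : sg (m r) = sg (l r)).
  { destruct (Rtotal_order (l r) 0) as [G|[G|G]].
    - rewrite (sg_neg (l r)) by auto. rewrite sg_neg; auto. apply (sign_neg h (l r)); auto.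
    - exfalso; apply (Hl r); auto.
    - rewrite (sg_pos (l r)) by auto. rewrite sg_pos; auto. apply (sign_pos h (l r)); auto. }
  rewrite <- mu_eq by auto. replace (1 + (c - 1)) with c by ring.
  rewrite <- Am, <- Sg. symmetry. apply sg_abs.
Qed.

Theorem theorem12p1 (I : Type) (S T : mat2) (p1 p2 q1 q2 : I -> R)
  (hS : GL2 S) (hT : GL2 T)
  (hp1 : forall r, p1 r <> 0) (hp2 : forall r, p2 r <> 0)
  (hq1 : forall r, q1 r <> 0) (hq2 : forall r, q2 r <> 0) :
  (exists f : ext -> ext, ext_homeomorphism f /\
     forall (r : I) (x : ext),
       f (act (mmul (mmul S (diag2 (p1 r) (p2 r))) (minv S)) x) =
       act (mmul (mmul T (diag2 (q1 r) (q2 r))) (minv T)) (f x))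
  <->
  (exists alpha : R, alpha <> -1 /\
     forall r : I,
       q1 r / q2 r = (p1 r / p2 r) * Rpower (Rabs (p1 r / p2 r)) alpha).
Proof.
  split; [|apply backward; auto].
  intros [f [[g [Hgf [Hfg [Hcf Hcg]]]] Hrel]]. unfold GL2 in *.
  assert (nz : forall a b, a <> 0 -> b <> 0 -> a / b <> 0).
  { intros a b Ha Hb. unfold Rdiv. apply Rmult_integral_contrapositive; split; auto. apply Rinv_neq_0_compat; auto. }
  apply (core I (fun r => p1 r / p2 r) (fun r => q1 r / q2 r)
    (fun x => act (minv T) (f (act S x))) (fun y => act (minv S) (g (act T y)))).
  - intros r; apply nz; auto.
  - intros r; apply nz; auto.
  - intros y. rewrite act_minv_r, Hfg, act_minv_l; auto.
  - intros x. rewrite act_minv_r, Hgf, act_minv_l; auto.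
  - apply cont_comp; [apply act_continuous, mdet_minv; auto|].
    apply cont_comp; [auto|apply act_continuous; auto].
  - intros r x.
    assert (E : act S (scale (p1 r / p2 r) x) = act (mmul (mmul S (diag2 (p1 r) (p2 r))) (minv S)) (act S x)).
    { rewrite act_conj by (auto; apply mdet_diag; auto). rewrite act_minv_l, act_diag; auto. }
    rewrite E, Hrel. rewrite act_conj by (auto; apply mdet_diag; auto).
    rewrite act_minv_l by auto. apply act_diag; auto.
Qed.
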